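(* If $\ell\ge 5$ is not divisible by three, then the uniform Tur\'an density of the tight $3$-uniform cycle $C_\ell^{(3)}$ is at least $4/27$.
   Context: For $\ell\ge 5$, the tight $3$-uniform cycle $C_\ell^{(3)}$ is the $3$-uniform hypergraph with $\ell$ vertices $v_1,\ldots,v_\ell$ whose edges are exactly the triples $\{v_i,v_{i+1},v_{i+2}\}$, $i\in[\ell]$, indices modulo $\ell$. For an $n$-vertex $3$-uniform hypergraph $H$ and $\varepsilon>0$, the $\varepsilon$-linear density of $H$ is the minimum edge density of an induced subhypergraph of $H$ with at least $\varepsilon n$ vertices. The uniform Tur\'an density of a $3$-uniform hypergraph $F$ is the supremum of all $d\in[0,1]$ such that for every $\varepsilon>0$ there exist arbitrarily large $F$-free $3$-uniform hypergraphs with $\varepsilon$-linear density at least $d$. *)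

(* Defs.v *)
From HB Require Import structures.
From mathcomp Require Import all_boot all_order all_algebra.
From mathcomp Require Import classical_sets reals.
Unset Strict Implicit. Unset Printing Implicit Defensive.
Import Order.TTheory GRing.Theory Num.Theory.
Local Open Scope ring_scope.

Definition uniform3 (n : nat) (H : {set {set 'I_n}}) : bool :=
  [forall e in H, #|e| == 3%N].

Definition contains_copy (k n : nat) (F : {set {set 'I_k}}) (H : {set {set 'I_n}}) : Prop :=
  exists f : 'I_k -> 'I_n, injective f /\ forall e, e \in F -> f @: e \in H.

Definition free_of (k n : nat) (F : {set {set 'I_k}}) (H : {set {set 'I_n}}) : Prop :=
  ~ contains_copy k n F H.

Lemma ord_gt0 (l : nat) (i : 'I_l) : (0 < l)%N.
Proof. exact: leq_ltn_trans (leq0n i) (ltn_ord i). Qed.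
Arguments ord_gt0 {l} i.

Definition cyc_shift (l : nat) (i : 'I_l) (k : nat) : 'I_l :=
  @Ordinal l ((i + k) %% l) (ltn_pmod (i + k) (ord_gt0 i)).

Definition tight_cycle (l : nat) : {set {set 'I_l}} :=
  [set [set cyc_shift l i 0; cyc_shift l i 1; cyc_shift l i 2] | i : 'I_l].

Definition induced_density (R : realType) (n : nat) (H : {set {set 'I_n}}) (S : {set 'I_n}) : R :=
  (#|[set e in H | e \subset S]|)%:R / ('C(#|S|, 3))%:R.

(* eps-linear density: minimum edge density of an induced subhypergraph on at
   least eps*n vertices (default 1 if there is no such vertex set, i.e. eps > 1). *)
Definition linear_density (R : realType) (eps : R) (n : nat) (H : {set {set 'I_n}}) : R :=
  \big[Order.min/1]_(S : {set 'I_n} | eps * n%:R <= (#|S|)%:R) induced_density R n H S.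

Definition uniform_turan_density (R : realType) (k : nat) (F : {set {set 'I_k}}) : R :=
  sup [set d : R | 0 <= d <= 1 /\
     forall eps : R, 0 < eps -> forall N : nat, exists n : nat, (N <= n)%N /\
       exists H : {set {set 'I_n}}, uniform3 n H /\ free_of k n F H /\
         d <= linear_density R eps n H].

(* Main.v *)
Require Import Defs.
From HB Require Import structures.
From mathcomp Require Import all_boot all_order all_algebra.
From mathcomp Require Import classical_sets reals.
From mathcomp Require Import sequences exp.
From mathcomp Require Import zify ring lra.
Import Order.TTheory GRing.Theory Num.Theory.
Local Open Scope ring_scope.
Section Comb.
Local Open Scope nat_scope.
Context {n : nat}.
Definition col := {ffun 'I_n * 'I_n -> 'I_3}.
Definition red (phi : col) (x y : 'I_n) : bool := phi (x, y) == ord0.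
Definition pat (phi : col) (x y z : 'I_n) : bool :=
  [&& x < y, y < z, red phi x y, ~~ red phi x z & ~~ red phi y z].
Definition Hg (phi : col) : {set {set 'I_n}} :=
  [set e | [exists x, exists y, exists z, pat phi x y z && (e == [set x; y; z])]].
Definition R2 (phi : col) (a b : 'I_n) : bool :=
  if a < b then red phi a b else red phi b a.

Lemma card3 (x y z : 'I_n) : x < y -> y < z -> #|[set x; y; z]| = 3.
Proof.
move=> xy yz; rewrite -finset.setUA !cardsU1 cards1 !inE.
have -> : (x == y) = false by apply/eqP => E; move: xy; rewrite E ltnn.
have -> : (x == z) = false by apply/eqP => E; move: xy yz; rewrite E; lia.
have -> : (y == z) = false by apply/eqP => E; move: yz; rewrite E ltnn.
by [].
Qed.

Lemma Hg_card phi e : e \in Hg phi -> #|e| = 3.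
Proof.
rewrite inE => /existsP[x /existsP[y /existsP[z /andP[/and5P[xy yz _ _ _] /eqP->]]]].
exact: card3.
Qed.

Lemma R2char phi x y z a b c : pat phi x y z -> [set a; b; c] = [set x; y; z] ->
  a != b -> b != c -> a != c -> R2 phi a b = (a < c) && (b < c).
Proof.
move=> /and5P[xy yz rxy rxz ryz] E ab bc ac.
have ha : a \in [set x; y; z] by rewrite -E !inE eqxx.
have hb : b \in [set x; y; z] by rewrite -E !inE eqxx ?orbT.
have hc : c \in [set x; y; z] by rewrite -E !inE eqxx ?orbT.
have xz : x < z by apply: ltn_trans yz.
move: rxz ryz => /negbTE rxz /negbTE ryz.
have yx : (y < x) = false by apply/negbTE; rewrite -leqNgt ltnW.
have zx : (z < x) = false by apply/negbTE; rewrite -leqNgt ltnW.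
have zy : (z < y) = false by apply/negbTE; rewrite -leqNgt ltnW.
move: ha hb hc ab bc ac; rewrite !inE => ha hb hc.
by case/orP: ha => [/orP[]|] /eqP -> ; case/orP: hb => [/orP[]|] /eqP -> ;
  case/orP: hc => [/orP[]|] /eqP -> ;
  rewrite ?eqxx //= /R2 ?xy ?yz ?xz ?yx ?zx ?zy ?ltnn ?rxy ?rxz ?ryz.
Qed.
End Comb.
Section Arith.
Local Open Scope nat_scope.
Lemma cyc_arith (l : nat) (V : nat -> nat) :
  (forall i, V (i + l) = V i) ->
  (forall i, [/\ V i != V i.+1, V i.+1 != V i.+2 & V i != V i.+2]) ->
  (forall i, (V i.+1 < V i.+3 /\ V i.+2 < V i.+3) <-> (V i.+1 < V i /\ V i.+2 < V i)) ->
  3 %| l.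
Proof.
move=> Hp Hd HB.
pose a i := V i < V i.+2 /\ V i.+1 < V i.+2.
have D : forall i, V i <> V i.+1 /\ V i.+1 <> V i.+2 /\ V i <> V i.+2.
  by move=> i; case: (Hd i) => /eqP ? /eqP ? /eqP ?.
have step : forall i, a i -> a (i.+3) /\ ~ a i.+1 /\ ~ a i.+2.
  move=> i; rewrite /a.
  have := HB i; have := HB i.+1; have := HB i.+2.
  have := D i; have := D i.+1; have := D i.+2; have := D i.+3.
  lia.
have ex0 : a 0 \/ a 1 \/ a 2.
  rewrite /a; have := HB 0; have := HB 1; have := D 0; have := D 1; have := D 2; lia.
have [i0 [i0le ai0]] : exists i0, i0 <= 2 /\ a i0.
  case: ex0 => [h|[h|h]].
  - by exists 0.
  - by exists 1.
  - by exists 2.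
have ind : forall k, a (i0 + 3 * k).
  elim=> [|k IH]; first by rewrite muln0 addn0.
  have -> : i0 + 3 * k.+1 = (i0 + 3 * k).+3 by rewrite mulnS; lia.
  by case: (step _ IH).
apply/negPn/negP => nd.
have : l %% 3 = 1 \/ l %% 3 = 2.
  move: nd; rewrite /dvdn; have := ltn_pmod l (isT : 0 < 3); lia.
have El : l = 3 * (l %/ 3) + l %% 3 by rewrite mulnC -divn_eq.
have ap : a (i0 + l).
  have e1 : V (i0 + l).+1 = V i0.+1 by rewrite -addSn Hp.
  have e2 : V (i0 + l).+2 = V i0.+2 by rewrite -!addSn Hp.
  by rewrite /a e1 e2 Hp.
have st := step _ (ind (l %/ 3)).
case=> hr.
- have E : i0 + l = (i0 + 3 * (l %/ 3)).+1 by lia.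
  by rewrite E in ap; case: st => _ [h _]; exact: h ap.
- have E : i0 + l = (i0 + 3 * (l %/ 3)).+2 by lia.
  by rewrite E in ap; case: st => _ [_ h]; exact: h ap.
Qed.
End Arith.
Section Free.
Local Open Scope nat_scope.
Context {n : nat}.

Lemma set3_rot (T : finType) (a b c : T) : [set b; c; a] = [set a; b; c].
Proof. by apply/setP=> t; rewrite !inE; case: (t == a); case: (t == b); case: (t == c). Qed.

Lemma Hg_free l (phi : @col n) : 5 <= l -> ~~ (3 %| l) -> free_of l n (tight_cycle l) (Hg phi).
Proof.
move=> l5 nd [f [finj Hf]].
have l0 : 0 < l by apply: leq_trans l5.
pose c (i : nat) : 'I_l := Ordinal (ltn_pmod i l0).
have cs : forall i k, cyc_shift l (c i) k = c (i + k).
  by move=> i k; apply: val_inj; rewrite /= modnDml.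
pose V i := val (f (c i)).
have edge : forall i, [set f (c i); f (c i.+1); f (c i.+2)] \in Hg phi.
  move=> i.
  have hE : [set cyc_shift l (c i) 0; cyc_shift l (c i) 1; cyc_shift l (c i) 2] \in tight_cycle l.
    by apply/imsetP; exists (c i).
  have := Hf _ hE.
  by rewrite !cs addn0 addn1 addn2 !imsetU !imset_set1.
have cne : forall i k, 0 < k < 3 -> c i != c (i + k).
  move=> i k /andP[k0 k3]; apply/eqP => /(congr1 val) /= /eqP.
  rewrite -{1}[i]addn0 eqn_modDl mod0n modn_small; last by apply: leq_trans k3 _; apply: leq_trans l5.
  by move=> /eqP k00; move: k0; rewrite -k00.
have fne : forall i k, 0 < k < 3 -> f (c i) != f (c (i + k)).
  by move=> i k hk; apply/negP => /eqP /finj /eqP; apply/negP; apply: cne.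
have Vne : forall i k, 0 < k < 3 -> V i != V (i + k).
  by move=> i k hk; apply/negP => /eqP /val_inj /eqP; apply/negP; apply: fne.
have chA : forall i, R2 phi (f (c i)) (f (c i.+1)) = (V i < V i.+2) && (V i.+1 < V i.+2).
  move=> i; have := edge i; rewrite inE => /existsP[x /existsP[y /existsP[z /andP[pxyz /eqP E]]]].
  rewrite /V; apply: (R2char _ _ _ _ _ _ _ pxyz E).
  - by have := fne i 1 isT; rewrite addn1.
  - by have := fne i.+1 1 isT; rewrite addn1.
  - by have := fne i 2 isT; rewrite addn2.
have chB : forall i, R2 phi (f (c i.+1)) (f (c i.+2)) = (V i.+1 < V i) && (V i.+2 < V i).
  move=> i; have := edge i; rewrite inE => /existsP[x /existsP[y /existsP[z /andP[pxyz /eqP E]]]].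
  rewrite /V; apply: (R2char _ _ _ _ _ _ _ pxyz); first by rewrite set3_rot E.
  - by have := fne i.+1 1 isT; rewrite addn1.
  - by rewrite eq_sym; have := fne i 2 isT; rewrite addn2.
  - by rewrite eq_sym; have := fne i 1 isT; rewrite addn1.
apply/negP: nd; apply/negPn.
apply: (@cyc_arith l V).
- move=> i; rewrite /V; congr (val (f _)); apply: val_inj; by rewrite /= modnDr.
- move=> i; split.
  + by have := Vne i 1 isT; rewrite addn1.
  + by have := Vne i.+1 1 isT; rewrite addn1.
  + by have := Vne i 2 isT; rewrite addn2.
- move=> i; have := chA i.+1; rewrite chB => E.
  split.
  + by move=> [h1 h2]; apply/andP; rewrite E; apply/andP.
  + by move=> [h1 h2]; apply/andP; rewrite -E; apply/andP.
Qed.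
End Free.
Section Indep.
Variables (R : realType) (K C : finType).

Definition mix (U : pred K) (phi psi : {ffun K -> C}) : {ffun K -> C} :=
  [ffun k => if U k then phi k else psi k].

Lemma indep (U : pred K) (f g : {ffun K -> C} -> R) :
  (forall phi psi : {ffun K -> C}, (forall k, U k -> phi k = psi k) -> f phi = f psi) ->
  (forall phi psi : {ffun K -> C}, (forall k, ~~ U k -> phi k = psi k) -> g phi = g psi) ->
  #|{ffun K -> C}|%:R * (\sum_phi f phi * g phi) = (\sum_phi f phi) * (\sum_phi g phi).
Proof.
move=> hf hg; symmetry.
rewrite mulr_suml.
under eq_bigr do rewrite mulr_sumr.
rewrite pair_bigA /=.
pose h (p : {ffun K -> C} * {ffun K -> C}) := (mix U p.1 p.2, mix U p.2 p.1).
have hK : involutive h.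
  case=> a b; rewrite /h /=; congr (_, _); apply/ffunP => k; rewrite !ffunE;
  by case: (U k).
transitivity (\sum_p (f (h p).1 * g (h p).1)).
  apply: eq_bigr => p _; congr (_ * _); [apply: hf | apply: hg] => k hk;
  by rewrite /h /= ffunE ?hk // (negbTE hk).
rewrite mulr_natl -sumrMnl.
under [in RHS]eq_bigr do rewrite -sumr_const.
rewrite (pair_bigA _ (fun a b => f a * g a)) /=.
by rewrite [RHS](reindex_inj (inv_inj hK)).
Qed.
End Indep.
Section Prod.
Variables (R : realType) (K C : finType).
Hypothesis C0 : (0 < #|C|)%N.

Definition Ex (h : {ffun K -> C} -> R) : R := (\sum_phi h phi) / #|{ffun K -> C}|%:R.

Lemma cardOm_gt0 : (0 < #|{ffun K -> C}|)%N.
Proof. by rewrite card_ffun expn_gt0 C0. Qed.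

Lemma Ex_mul (U : pred K) (f g : {ffun K -> C} -> R) :
  (forall phi psi : {ffun K -> C}, (forall k, U k -> phi k = psi k) -> f phi = f psi) ->
  (forall phi psi : {ffun K -> C}, (forall k, ~~ U k -> phi k = psi k) -> g phi = g psi) ->
  Ex (fun phi => f phi * g phi) = Ex f * Ex g.
Proof.
move=> hf hg; rewrite /Ex.
have hN : (#|{ffun K -> C}|%:R : R) != 0 by rewrite pnatr_eq0 -lt0n cardOm_gt0.
rewrite mulrACA -(@indep R K C U f g hf hg).
by field.
Qed.

Lemma Ex_const (c : R) : Ex (fun _ => c) = c.
Proof.
have hN : (#|{ffun K -> C}|%:R : R) != 0 by rewrite pnatr_eq0 -lt0n cardOm_gt0.
rewrite /Ex sumr_const.
rewrite -[c *+ _]mulr_natr.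
by rewrite mulfK.
Qed.

Lemma Ex_affine (a b : R) (h : {ffun K -> C} -> R) :
  Ex (fun phi => a + b * h phi) = a + b * Ex h.
Proof.
have hN : (#|{ffun K -> C}|%:R : R) != 0 by rewrite pnatr_eq0 -lt0n cardOm_gt0.
rewrite /Ex big_split /= sumr_const -mulr_sumr -[a *+ _]mulr_natr.
by field.
Qed.

Lemma Ex_prod (I : eqType) (s : seq I) (U : I -> pred K) (g : I -> {ffun K -> C} -> R) :
  (forall i (phi psi : {ffun K -> C}), (forall k, U i k -> phi k = psi k) -> g i phi = g i psi) ->
  (forall i j, i \in s -> j \in s -> i != j -> forall k, U i k -> ~~ U j k) ->
  uniq s ->
  Ex (fun phi => \prod_(i <- s) g i phi) = \prod_(i <- s) Ex (g i).
Proof.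
move=> hdep; elim: s => [|a s IH] hdis us.
  rewrite big_nil -[RHS](Ex_const 1) /Ex; congr (_ / _); apply: eq_bigr => phi _.
  exact: big_nil.
move: us => /= /andP[nas us].
have -> : Ex (fun phi => \prod_(i <- a :: s) g i phi) =
    Ex (fun phi => g a phi * \prod_(i <- s) g i phi).
  by rewrite /Ex; congr (_ / _); apply: eq_bigr => phi _; rewrite big_cons.
rewrite big_cons (Ex_mul (U a)); first congr (_ * _).
- apply: IH => // i j hi hj; apply: hdis; by rewrite inE ?hi ?hj orbT.
- by move=> phi psi h; apply: hdep.
- move=> phi psi h; rewrite big_seq_cond [RHS]big_seq_cond.
  apply: eq_bigr => i /andP[hi _]; apply: hdep => k hk; apply: h.
  apply: (hdis i a) => //; first by rewrite inE hi orbT.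
  - by rewrite inE eqxx.
  - by apply: contraNneq nas => <-.
Qed.
End Prod.
Section Count.
Local Open Scope nat_scope.
Lemma count3 (K : finType) (c1 c2 c3 : K) : c1 != c2 -> c1 != c3 -> c2 != c3 ->
  #|[set phi : {ffun K -> 'I_3} | [&& phi c1 == ord0, phi c2 != ord0 & phi c3 != ord0]]|
  = 4 * 3 ^ (#|K| - 3).
Proof.
move=> h12 h13 h23.
pose F (k : K) : pred 'I_3 := if k == c1 then pred1 ord0 else
   if (k == c2) || (k == c3) then predC1 ord0 else predT.
rewrite (eq_card (B := family F)); last first.
  move=> phi; rewrite inE /= /F; apply/and3P/familyP.
  - case=> e1 e2 e3 k; case: eqP => [->|_] //=.
    by case: eqP => [->|_] //=; case: eqP => [->|_].
  - move=> hk; split; first by have := hk c1; rewrite eqxx.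
    + by have := hk c2; rewrite eq_sym (negbTE h12) eqxx.
    + by have := hk c3; rewrite eq_sym (negbTE h13) eqxx orbT.
rewrite card_family foldrE big_map big_enum /=.
rewrite (bigD1 c1) //= (bigD1 c2) /=; last by rewrite eq_sym h12.
rewrite (bigD1 c3) /=; last by rewrite eq_sym h13 eq_sym h23.
have h21 : (c2 == c1) = false by rewrite eq_sym (negbTE h12).
have h31 : (c3 == c1) = false by rewrite eq_sym (negbTE h13).
have h32 : (c3 == c2) = false by rewrite eq_sym (negbTE h23).
rewrite /F eqxx h21 h31 h32 eqxx /=.
rewrite eqxx card1 cardC1 card_ord.
rewrite (eq_bigr (fun _ => 3)); last first.
  move=> i /andP[/andP[/negbTE-> /negbTE->] /negbTE->] /=.
  by rewrite card_ord.
rewrite prod_nat_const.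
have S3 : #|[set c1; c2; c3]| = 3.
  by rewrite -finset.setUA !cardsU1 cards1 !inE (negbTE h12) (negbTE h13) (negbTE h23).
have -> : #|[pred i | (i != c1) && (i != c2) && (i != c3)]| = #|~: [set c1; c2; c3]|.
  by apply: eq_card => i; rewrite !inE /= !negb_or.
by rewrite cardsCs finset.setCK S3 mul1n mulnA.
Qed.
End Count.
Section Sets3.
Local Open Scope nat_scope.
Context {n : nat}.

Lemma set3_perm (a b c : 'I_n) :
  [set a; b; c] = [set b; a; c] /\ [set a; b; c] = [set a; c; b] /\
  [set a; b; c] = [set c; b; a] /\ [set a; b; c] = [set b; c; a] /\
  [set a; b; c] = [set c; a; b].
Proof.
by split; [|split; [|split; [|split]]]; apply/setP => t; rewrite !inE;
  case: (t == a); case: (t == b); case: (t == c).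
Qed.

Lemma sort3 (a b c : 'I_n) : a != b -> b != c -> a != c ->
  exists x y z : 'I_n, [/\ x < y, y < z & [set a; b; c] = [set x; y; z]].
Proof.
move=> ab bc ac.
have [P1 [P2 [P3 [P4 P5]]]] := set3_perm a b c.
have nab : (a : nat) <> b by move=> /val_inj /eqP; apply/negP.
have nbc : (b : nat) <> c by move=> /val_inj /eqP; apply/negP.
have nac : (a : nat) <> c by move=> /val_inj /eqP; apply/negP.
case: (ltngtP a b) => hab; last by [].
- case: (ltngtP b c) => hbc; last by [].
  + by exists a, b, c.
  + case: (ltngtP a c) => hac; last by [].
    * by exists a, c, b.
    * by exists c, a, b.
- case: (ltngtP b c) => hbc; last by [].
  + case: (ltngtP a c) => hac; last by [].
    * by exists b, a, c.
    * by exists b, c, a.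
  + by exists c, b, a.
Qed.

Lemma set3_uniq (x y z x' y' z' : 'I_n) : x < y -> y < z -> x' < y' -> y' < z' ->
  [set x; y; z] = [set x'; y'; z'] -> [/\ x = x', y = y' & z = z'].
Proof.
move=> xy yz xy' yz' E.
have m1 : x \in [set x'; y'; z'] by rewrite -E !inE eqxx.
have m2 : y \in [set x'; y'; z'] by rewrite -E !inE eqxx ?orbT.
have m3 : z \in [set x'; y'; z'] by rewrite -E !inE eqxx ?orbT.
have m4 : x' \in [set x; y; z] by rewrite E !inE eqxx.
have m6 : z' \in [set x; y; z] by rewrite E !inE eqxx ?orbT.
rewrite !inE in m1 m2 m3 m4 m6.
have ex1 : x = x'.
  apply: val_inj; move: m1 m4; clear -xy yz xy' yz'.
  case/orP => [/orP[]|] /eqP /(congr1 val) /= e1; case/orP => [/orP[]|] /eqP /(congr1 val) /= e2; lia.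
have ex3 : z = z'.
  apply: val_inj; move: m3 m6; clear -xy yz xy' yz'.
  case/orP => [/orP[]|] /eqP /(congr1 val) /= e1; case/orP => [/orP[]|] /eqP /(congr1 val) /= e2; lia.
split => //; apply: val_inj; move: m2; rewrite -ex1 -ex3; clear -xy yz xy' yz'.
case/orP => [/orP[]|] /eqP /(congr1 val) /=; lia.
Qed.
End Sets3.
Arguments set3_uniq {n x y z x' y' z'}.
Arguments sort3 {n a b c}.
Section Prob.
Local Open Scope nat_scope.
Context {n : nat}.

Lemma Hg_sorted (phi : @col n) (x y z : 'I_n) : x < y -> y < z ->
  ([set x; y; z] \in Hg phi) = [&& red phi x y, ~~ red phi x z & ~~ red phi y z].
Proof.
move=> xy yz; apply/idP/idP.
- rewrite inE => /existsP[x' /existsP[y' /existsP[z' /andP[p /eqP E]]]].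
  move: (p) => /and5P[xy' yz' r1 r2 r3].
  by have [-> -> ->] := set3_uniq xy yz xy' yz' E; rewrite r1 r2 r3.
- move=> /and3P[r1 r2 r3]; rewrite inE; apply/existsP; exists x; apply/existsP; exists y.
  by apply/existsP; exists z; rewrite /pat xy yz r1 r2 r3 eqxx.
Qed.

Lemma Hg_dep1 (A : {set 'I_n}) (phi psi : @col n) :
  (forall k : 'I_n * 'I_n, [&& k.1 \in A, k.2 \in A & k.1 < k.2] -> phi k = psi k) ->
  A \in Hg phi -> A \in Hg psi.
Proof.
move=> h; rewrite !inE => /existsP[x /existsP[y /existsP[z /andP[p /eqP E]]]].
apply/existsP; exists x; apply/existsP; exists y; apply/existsP; exists z.
move: p => /and5P[xy yz r1 r2 r3].
have xz : x < z by apply: ltn_trans yz.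
have hx : x \in A by rewrite E !inE eqxx.
have hy : y \in A by rewrite E !inE eqxx ?orbT.
have hz : z \in A by rewrite E !inE eqxx ?orbT.
rewrite /pat /red xy yz E eqxx /= -!h ?hx ?hy ?hz ?xy ?yz ?xz //.
by move: r1 r2 r3; rewrite /red => -> -> ->.
Qed.

Lemma Hg_dep (A : {set 'I_n}) (phi psi : @col n) :
  (forall k : 'I_n * 'I_n, [&& k.1 \in A, k.2 \in A & k.1 < k.2] -> phi k = psi k) ->
  (A \in Hg phi) = (A \in Hg psi).
Proof.
move=> h; apply/idP/idP; apply: Hg_dep1 => // k hk; exact/esym/h.
Qed.

Lemma set3_ex (A : {set 'I_n}) : #|A| = 3 ->
  exists x y z : 'I_n, [/\ x < y, y < z & A = [set x; y; z]].
Proof.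
move=> A3.
have /card_gt0P[a aA] : 0 < #|A| by rewrite A3.
have : #|A :\ a| == 2 by move: A3; rewrite (cardsD1 a) aA add1n => -[->].
case/cards2P => b [c [bc Ea]].
have hb : b \in A :\ a by rewrite Ea !inE eqxx.
have hc : c \in A :\ a by rewrite Ea !inE eqxx orbT.
rewrite !inE in hb hc; case/andP: hb => ba _; case/andP: hc => ca _.
have EA : A = [set a; b; c] by rewrite -finset.setUA -Ea finset.setD1K.
have ab : a != b by rewrite eq_sym.
have ac : a != c by rewrite eq_sym.
have [x [y [z [xy yz E]]]] := sort3 ab bc ac.
by exists x, y, z; rewrite EA E.
Qed.
End Prob.
Section Prob2.
Context {n : nat} {R : realType}.

Lemma Hg_prob (A : {set 'I_n}) : #|A| = 3%N ->
  Ex R ('I_n * 'I_n)%type 'I_3 (fun phi => (A \in Hg phi)%:R) = 4%:R / 27%:R.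
Proof.
move=> A3; have [x [y [z [xy yz ->]]]] := set3_ex _ A3.
rewrite /Ex.
have -> : \sum_(phi : col) ([set x; y; z] \in Hg phi)%:R =
  (#|[set phi : {ffun 'I_n * 'I_n -> 'I_3} | [&& phi (x, y) == ord0, phi (x, z) != ord0 & phi (y, z) != ord0]]|%:R : R).
  rewrite -sum1_card natr_sum [RHS]big_mkcond /=; apply: eq_bigr => phi _.
  by rewrite Hg_sorted // inE /red; case: (_ && _).
have n3 : (3 <= n)%N by have := ltn_ord z; lia.
rewrite count3; first last;
  try by rewrite xpair_eqE; apply/negP => /andP[/eqP e1 /eqP e2]; move: xy yz;
    rewrite ?e1 ?e2; lia.
rewrite card_ffun card_prod !card_ord.
have -> : (3 ^ (n * n) = 3 ^ (n * n - 3) * 27)%N.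
  by rewrite -[27%N]/(3 ^ 3)%N -expnD subnK //; nia.
rewrite !natrM; field.
by rewrite pnatr_eq0 expn_eq0.
Qed.
End Prob2.
Section Tail.
Context {R : realType}.

Lemma expN_le (lam : R) : 0 <= lam -> expR (- lam) <= 1 - lam + lam ^+ 2.
Proof.
move=> l0.
have h1 : 1 + lam / 2 <= expR (lam / 2) by apply: expR_ge1Dx.
have h2 : expR lam = expR (lam / 2) ^+ 2.
  by rewrite -expRM_natl; congr expR; field.
have h3 : (1 + lam / 2) ^+ 2 <= expR lam.
  by rewrite h2; apply: lerXn2r; rewrite ?nnegrE //; lra.
have E1 : expR (- lam) * expR lam = 1 by rewrite mulrC expRxMexpNx_1.
have Ep : 0 < expR lam := expR_gt0 lam.
have Em : 0 < expR (- lam) := expR_gt0 (- lam).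
set a := expR (- lam) in E1 Em *; set E := expR lam in h3 E1 Ep.
have q0 : 0 < 1 - lam + lam ^+ 2 by nra.
have : 1 <= (1 - lam + lam ^+ 2) * E.
  apply: (le_trans _ (ler_wpM2l (ltW q0) h3)); nra.
nra.
Qed.
End Tail.
Section Tail2.
Context {n : nat} {R : realType}.
Variable F : {set {set 'I_n}}.
Hypothesis F3 : forall A, A \in F -> #|A| = 3%N.
Definition KA (A : {set 'I_n}) : pred ('I_n * 'I_n) :=
  fun k => [&& k.1 \in A, k.2 \in A & (k.1 < k.2)%N].
Hypothesis Fdis : forall A B, A \in F -> B \in F -> A != B -> forall k, KA A k -> ~~ KA B k.
Definition Xc (phi : @col n) : nat := #|[set A in F | A \in Hg phi]|.

Lemma Xc_sum phi : Xc phi = (\sum_(A <- enum F) (A \in Hg phi))%N.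
Proof.
rewrite /Xc -sum1_card big_enum /=.
rewrite (eq_bigl (fun A => (A \in F) && (A \in Hg phi))); last by move=> A; rewrite inE.
rewrite big_mkcondr /=; apply: eq_bigr => A _; by case: (A \in Hg phi).
Qed.

Lemma C3 : (0 < #|'I_3|)%N. Proof. by rewrite card_ord. Qed.

Lemma tail_key (lam : R) :
  \sum_(phi : @col n) expR (- lam * (Xc phi)%:R) =
  #|{ffun 'I_n * 'I_n -> 'I_3}|%:R * (1 + 4 / 27 * (expR (- lam) - 1)) ^+ #|F|.
Proof.
have hN : (#|{ffun 'I_n * 'I_n -> 'I_3}|%:R : R) != 0.
  by rewrite pnatr_eq0 -lt0n (@cardOm_gt0 _ _ C3).
have e1 : forall phi, expR (- lam * (Xc phi)%:R) =
    \prod_(A <- enum F) expR (- lam * (A \in Hg phi)%:R).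
  by move=> phi; rewrite Xc_sum natr_sum mulr_sumr expR_sum.
under eq_bigr do rewrite e1.
have -> : \sum_(phi : @col n) \prod_(A <- enum F) expR (- lam * (A \in Hg phi)%:R) =
   #|{ffun 'I_n * 'I_n -> 'I_3}|%:R *
   Ex R ('I_n * 'I_n)%type 'I_3 (fun phi => \prod_(A <- enum F) expR (- lam * (A \in Hg phi)%:R)).
  by rewrite /Ex mulrC mulfVK.
congr (_ * _).
rewrite (@Ex_prod R _ _ C3 _ (enum F) KA (fun A phi => expR (- lam * (A \in Hg phi)%:R))).
- rewrite big_enum /=.
  rewrite (eq_bigr (fun _ => 1 + 4 / 27 * (expR (- lam) - 1))); first by rewrite prodr_const.
  move=> A AF.
  have -> : (fun phi : @col n => expR (- lam * (A \in Hg phi)%:R)) =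
            (fun phi => 1 + (expR (- lam) - 1) * (A \in Hg phi)%:R).
    by apply: boolp.funext => phi; case: (A \in Hg phi); rewrite ?mulr1 ?mulr0 ?expR0; ring.
  by rewrite (@Ex_affine R _ _ C3) Hg_prob ?F3 // mulrC.
- move=> A phi psi h /=.
  by have -> : (A \in Hg phi) = (A \in Hg psi) by apply: Hg_dep => k hk; exact: h.
- by move=> A B; rewrite !mem_enum; apply: Fdis.
- exact: enum_uniq.
Qed.

Lemma tail (lam t : R) : 0 <= lam ->
  (#|[set phi : @col n | (Xc phi)%:R < 4 / 27 * #|F|%:R - t]|%:R : R) <=
  #|{ffun 'I_n * 'I_n -> 'I_3}|%:R * expR (4 / 27 * #|F|%:R * lam ^+ 2 - lam * t).
Proof.
move=> l0.
set B := [set phi : @col n | _].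
set N := #|{ffun 'I_n * 'I_n -> 'I_3}|.
set k := #|F|.
set p : R := 4 / 27.
have p0 : 0 <= p by rewrite /p; lra.
have main : #|B|%:R * expR (- lam * (p * k%:R - t)) <=
            N%:R * expR (k%:R * (p * (- lam + lam ^+ 2))).
  apply: (@le_trans _ _ (\sum_(phi : @col n) expR (- lam * (Xc phi)%:R))).
    apply: (@le_trans _ _ (\sum_(phi in B) expR (- lam * (Xc phi)%:R))).
      rewrite mulr_natl -sumr_const.
      apply: ler_sum => phi; rewrite inE => hphi; rewrite ler_expR.
      rewrite /p; nra.
    rewrite [X in _ <= X](bigID (mem B)) /= lerDl.
    by apply: sumr_ge0 => phi _; apply: expR_ge0.
  rewrite tail_key ler_wpM2l // expRM_natl.
  apply: lerXn2r; rewrite ?nnegrE ?expR_ge0 //.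
    have := expR_gt0 (- lam); rewrite /p; nra.
  apply: (le_trans (expR_ge1Dx _)); rewrite ler_expR.
  by apply: ler_wpM2l => //; have := expN_le _ l0; lra.
have E0 : expR (- lam * (p * k%:R - t)) * expR (lam * (p * k%:R - t)) = 1.
  by rewrite -expRD mulNr addNr expR0.
have -> : (#|B|%:R : R) = #|B|%:R * expR (- lam * (p * k%:R - t)) * expR (lam * (p * k%:R - t)).
  by rewrite -mulrA E0 mulr1.
apply: (le_trans (ler_wpM2r (expR_ge0 _) main)).
rewrite -[X in X <= _]mulrA -expRD.
suff -> : k%:R * (p * (- lam + lam ^+ 2)) + lam * (p * k%:R - t) = p * k%:R * lam ^+ 2 - lam * t by [].
ring.
Qed.
End Tail2.
Section Fam.
Local Open Scope nat_scope.
Context {n : nat}.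

Definition ssum (A : {set 'I_n}) : nat := \sum_(x in A) (x : nat).

Definition Fam (S : {set 'I_n}) (r : 'I_n) : {set {set 'I_n}} :=
  [set A : {set 'I_n} | [&& A \subset S, #|A| == 3 & ssum A %% n == r]].

Lemma Fam3 S r A : A \in Fam S r -> #|A| = 3.
Proof. by rewrite inE => /and3P[_ /eqP -> _]. Qed.

Lemma third (A : {set 'I_n}) u w : #|A| = 3 -> u \in A -> w \in A -> u != w ->
  exists a, A = [set u; w; a] /\ ssum A = u + (w + a).
Proof.
move=> A3 uA wA uw.
have wA' : w \in A :\ u by rewrite !inE eq_sym uw.
have : #|A :\ u :\ w| == 1.
  by move: A3; rewrite (cardsD1 u A) uA (cardsD1 w (A :\ u)) wA' !add1n => -[->].
case/cards1P => a Ea; exists a; split.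
  by rewrite -finset.setUA -Ea !finset.setD1K.
by rewrite /ssum (big_setD1 _ uA) (big_setD1 _ wA') Ea big_set1.
Qed.

Lemma Fam_dis S r A B : A \in Fam S r -> B \in Fam S r -> A != B ->
  forall k, KA A k -> ~~ KA B k.
Proof.
rewrite !inE => /and3P[_ /eqP A3 /eqP rA] /and3P[_ /eqP B3 /eqP rB] AB k.
case/and3P => uA wA uw; apply/negP => /and3P[uB wB _].
have uw' : k.1 != k.2 by rewrite neq_ltn uw.
have [a [EA SA]] := third _ _ _ A3 uA wA uw'.
have [b [EB SB]] := third _ _ _ B3 uB wB uw'.
move/negP: AB; apply; apply/eqP.
have : a %% n = b %% n.
  apply/eqP; rewrite -(eqn_modDl k.2) -(eqn_modDl k.1) -SA -SB rA rB //.
rewrite !modn_small ?ltn_ord // => /val_inj ab.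
by rewrite EA EB ab.
Qed.
End Fam.
Lemma sum_ind_card (R : realType) (T : finType) (P : pred T) :
  \sum_(i : T) ((P i)%:R : R) = #|[set i | P i]|%:R.
Proof.
rewrite -sum1_card natr_sum [RHS]big_mkcond /=; apply: eq_bigr => i _.
by rewrite inE; case: (P i).
Qed.

Section Union.
Context {n : nat} {R : realType}.

Lemma card_setT_pow : #|{set 'I_n}| = (2 ^ n)%N.
Proof.
have := card_powerset [set: 'I_n]; rewrite cardsT card_ord => <-.
by apply: eq_card => A; rewrite !inE finset.subsetT.
Qed.

Definition bad (lam gam : R) (S : {set 'I_n}) (r : 'I_n) (phi : @col n) : bool :=
  (Xc (Fam S r) phi)%:R < 4 / 27 * #|Fam S r|%:R -
     (4 / 27 * #|Fam S r|%:R * lam + gam * (n * n)%:R).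

Lemma bad_card (lam gam : R) S r : 0 <= lam ->
  (#|[set phi | bad lam gam S r phi]|%:R : R) <=
  #|{ffun 'I_n * 'I_n -> 'I_3}|%:R * expR (- (lam * gam) * (n * n)%:R).
Proof.
move=> l0.
have := @tail n R (Fam S r) (@Fam3 n S r) (@Fam_dis n S r) lam
  (4 / 27 * #|Fam S r|%:R * lam + gam * (n * n)%:R) l0.
have -> : 4 / 27 * #|Fam S r|%:R * lam ^+ 2 -
   lam * (4 / 27 * #|Fam S r|%:R * lam + gam * (n * n)%:R) = - (lam * gam) * (n * n)%:R.
  by ring.
by [].
Qed.

Lemma good_exists (lam gam : R) : 0 <= lam ->
  (2 ^ n * n)%:R * expR (- (lam * gam) * (n * n)%:R) < 1 ->
  exists phi : @col n, forall S r, ~~ bad lam gam S r phi.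
Proof.
move=> l0 H.
set N := #|{ffun 'I_n * 'I_n -> 'I_3}|.
set e := expR (- (lam * gam) * (n * n)%:R).
have N0 : (0 < N)%N by apply: (@cardOm_gt0 _ _ C3).
have eN : (0 < e) by apply: expR_gt0.
pose G := [set phi : @col n | [forall S, forall r, ~~ bad lam gam S r phi]].
have [G0|[phi]] := set_0Vmem G; last first.
  by rewrite inE => /forallP h; exists phi => S r; have /forallP := h S; apply.
exfalso.
have h1 : (N%:R : R) <= \sum_(phi : @col n) \sum_(S : {set 'I_n}) \sum_(r : 'I_n) (bad lam gam S r phi)%:R.
  rewrite /N -sum1_card natr_sum; apply: ler_sum => phi _.
  have : phi \notin G by rewrite G0 inE.
  rewrite inE negb_forall => /existsP[S0]; rewrite negb_forall => /existsP[r0]; rewrite negbK => b0.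
  rewrite (bigD1 S0) //= (bigD1 r0) //= b0.
  have s1 : 0 <= \sum_(r | r != r0) (bad lam gam S0 r phi)%:R :> R by apply: sumr_ge0.
  have s2 : 0 <= \sum_(S | S != S0) \sum_r (bad lam gam S r phi)%:R :> R.
    by apply: sumr_ge0 => S _; apply: sumr_ge0.
  rewrite [true%:R]/=; lra.
have h2 : \sum_(phi : @col n) \sum_(S : {set 'I_n}) \sum_(r : 'I_n) ((bad lam gam S r phi)%:R : R)
   = \sum_(S : {set 'I_n}) \sum_(r : 'I_n) (#|[set phi | bad lam gam S r phi]|%:R : R).
  rewrite exchange_big; apply: eq_bigr => S _; rewrite exchange_big; apply: eq_bigr => r _.
  exact: sum_ind_card.
have h3 : \sum_(S : {set 'I_n}) \sum_(r : 'I_n) (#|[set phi | bad lam gam S r phi]|%:R : R)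
   <= \sum_(S : {set 'I_n}) \sum_(r : 'I_n) (N%:R * e).
  by apply: ler_sum => S _; apply: ler_sum => r _; apply: bad_card.
rewrite sumr_const sumr_const card_ord card_setT_pow in h3.
have h4 : (N%:R : R) <= (2 ^ n * n)%:R * (N%:R * e).
  apply: (le_trans h1); rewrite h2; apply: (le_trans h3).
  by rewrite -mulrnA mulr_natl mulnC mulr_natl.
have Np : (0 : R) < N%:R by rewrite ltr0n.
move: H; rewrite -/e => H.
nra.
Qed.
End Union.
Section Dens.
Local Open Scope nat_scope.
Context {n : nat}.

Lemma sum_cond_card (T : finType) (Q : {set T}) (P : pred T) :
  \sum_(A in Q) (P A : nat) = #|[set A in Q | P A]|.
Proof.
rewrite -sum1_card [RHS](eq_bigl (fun A => (A \in Q) && P A)); last by move=> A; rewrite inE.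
by rewrite big_mkcondr /=; apply: eq_bigr => A _; case: (P A).
Qed.

Lemma part_card (Q : {set {set 'I_n}}) : 0 < n ->
  \sum_(r : 'I_n) #|[set A in Q | ssum A %% n == r]| = #|Q|.
Proof.
move=> n0.
under eq_bigr do rewrite -sum_cond_card.
rewrite exchange_big /= -sum1_card; apply: eq_bigr => A _.
rewrite (bigD1 (Ordinal (ltn_pmod (ssum A) n0))) //= eqxx big1 // => r hr.
case: eqP => // e; exfalso; move/eqP: hr; apply; apply: val_inj => /=; by rewrite e.
Qed.
End Dens.
Section Dens2.
Context {n : nat} {R : realType}.

Lemma count_edges (H : {set {set 'I_n}}) (S : {set 'I_n}) : (0 < n)%N ->
  (forall e, e \in H -> #|e| = 3%N) ->
  #|[set e in H | e \subset S]| = (\sum_(r : 'I_n) #|[set A in Fam S r | A \in H]|)%N.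
Proof.
move=> n0 H3; rewrite -part_card //; apply: eq_bigr => r _; apply: eq_card => A.
rewrite !inE; case hA: (A \in H); rewrite ?andbF //= (H3 _ hA) eqxx /=.
by rewrite andbT.
Qed.

Lemma fam_sum (S : {set 'I_n}) : (0 < n)%N -> (\sum_(r : 'I_n) #|Fam S r|)%N = 'C(#|S|, 3).
Proof.
move=> n0; rewrite -cards_draws -part_card //; apply: eq_bigr => r _; apply: eq_card => A.
by rewrite !inE andbA.
Qed.

Lemma dens_lb (lam gam : R) (phi : @col n) (S : {set 'I_n}) : (0 < n)%N ->
  (forall r, ~~ bad lam gam S r phi) ->
  4 / 27 * (1 - lam) * 'C(#|S|, 3)%:R - n%:R * (gam * (n * n)%:R)
    <= #|[set e in Hg phi | e \subset S]|%:R.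
Proof.
move=> n0 hg.
rewrite (count_edges _ _ n0 (@Hg_card n phi)) -(fam_sum S n0) !natr_sum mulr_sumr.
have -> : (n%:R : R) * (gam * (n * n)%:R) = \sum_(r : 'I_n) (gam * (n * n)%:R).
  by rewrite sumr_const card_ord mulr_natl.
rewrite -sumrB.
apply: ler_sum => r _.
have := hg r; rewrite /bad -leNgt /Xc.
set X := (#|_|%:R : R); set k := (#|Fam S r|%:R : R).
by move=> h; rewrite -/X; lra.
Qed.
End Dens2.
Section Final.
Context {R : realType}.

Lemma binom3_lb (s : nat) : (3 <= s)%N -> (s%:R ^+ 3 : R) <= 27 * 'C(s, 3)%:R.
Proof.
case: s => [|[|[|m]]] // _.
have h : ('C(m.+3, 3) * 6 = m.+3 * m.+2 * m.+1)%N.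
  by rewrite -[6%N]/(3`!)%N bin_ffact !ffactnS ffactn0 /= muln1 mulnA.
have h' : ('C(m.+3, 3)%:R * 6 : R) = m.+3%:R * m.+2%:R * m.+1%:R.
  by rewrite -[6]/(6%:R) -!natrM h.
have m0 : (0 : R) <= m%:R by [].
rewrite -[m.+3]addn3 -[m.+2]addn2 -[m.+1]addn1 !natrD in h' *.
nra.
Qed.

Lemma two_pow_le (n : nat) : ((2 ^ n * n)%:R : R) <= expR (2 * n%:R).
Proof.
have e2 : (2 : R) <= expR 1 by have := expR_ge1Dx (1 : R); lra.
have h1 : ((2 ^ n)%:R : R) <= expR (n%:R).
  rewrite -[n%:R]mulr1 expRM_natl natrX; apply: lerXn2r; rewrite ?nnegrE //.
  exact: (le_trans _ e2).
have h2 : (n%:R : R) <= (2 ^ n)%:R by rewrite ler_nat ltnW // ltn_expl.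
rewrite natrM mulrDl mul1r expRD.
apply: ler_pM => //; first exact: (le_trans h2).
Qed.
End Final.
Lemma d_in (R : realType) (l : nat) (d : R) : (5 <= l)%N -> ~~ (3 %| l)%N ->
  0 <= d -> d < 4 / 27 ->
  forall eps : R, 0 < eps -> forall N : nat, exists n : nat, (N <= n)%N /\
       exists H : {set {set 'I_n}}, uniform3 n H /\ free_of l n (tight_cycle l) H /\
         d <= linear_density R eps n H.
Proof.
move=> l5 nd d0 dp eps e0 N0.
set p : R := 4 / 27 in dp *.
have p0 : 0 < p by rewrite /p; lra.
set lam : R := (p - d) / (2 * p).
set gam : R := (p - d) * eps ^+ 3 / 54.
have l0 : 0 < lam by rewrite /lam; apply: divr_gt0; lra.
have g0 : 0 < gam by rewrite /gam; apply: divr_gt0 => //; apply: mulr_gt0; [lra | exact: exprn_gt0].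
set c := lam * gam.
have c0 : 0 < c by apply: mulr_gt0.
set n := ((Num.truncn (2 / c + 3 / eps)).+1 + N0)%N.
have hn : 2 / c + 3 / eps < n%:R.
  apply: (lt_le_trans (truncnS_gt _)); rewrite ler_nat; exact: leq_addr.
have h2c : 0 < 2 / c by apply: divr_gt0.
have h3e : 0 < 3 / eps by apply: divr_gt0.
have cn : 2 < c * n%:R.
  have : 2 / c < n%:R by lra.
  by rewrite ltr_pdivrMr // mulrC.
have en : 3 < eps * n%:R.
  have : 3 / eps < n%:R by lra.
  by rewrite ltr_pdivrMr // mulrC.
have n0 : (0 < n)%N by rewrite /n addSn.
have hbound : (2 ^ n * n)%:R * expR (- (lam * gam) * (n * n)%:R) < 1.
  apply: (le_lt_trans (ler_wpM2r (expR_ge0 _) (two_pow_le n))).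
  rewrite -expRD expR_lt1 natrM -/c.
  have np : (0 : R) < n%:R by rewrite ltr0n.
  nra.
have [phi hphi] := @good_exists n R lam gam (ltW l0) hbound.
exists n; split; first exact: leq_addl.
exists (Hg phi); split.
  by apply/forallP => e; apply/implyP => he; rewrite (Hg_card _ _ he).
split; first exact: Hg_free.
rewrite /linear_density.
apply: (big_ind (fun x => d <= x)).
- have : p < 1 by rewrite /p; lra.
  lra.
- by move=> x y hx hy; rewrite le_min hx hy.
move=> S hS.
set s := #|S|.
have s3 : (3 <= s)%N.
  have : (3 : R) < s%:R by lra.
  by rewrite ltr_nat => /ltnW.
have hd := @dens_lb n R lam gam phi S n0 (hphi S).
have C0 : (0 : R) < 'C(s, 3)%:R by rewrite ltr0n bin_gt0.
have hC := @binom3_lb R s s3.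
rewrite /induced_density -/s ler_pdivlMr //.
apply: (le_trans _ hd).
have hen : (eps * n%:R) ^+ 3 <= s%:R ^+ 3.
  by apply: lerXn2r; rewrite ?nnegrE //; lra.
have e3 : n%:R * (gam * (n * n)%:R) = (p - d) / 2 * ((eps * n%:R) ^+ 3 / 27).
  by rewrite /gam natrM; field.
have key : (p - d) / 2 * ((eps * n%:R) ^+ 3 / 27) <= (p - d) / 2 * 'C(s, 3)%:R.
  apply: ler_wpM2l; first lra.
  rewrite ler_pdivrMr //; lra.
have ep : p * (1 - lam) = p - (p - d) / 2 by rewrite /lam; field; lra.
rewrite -e3 in key.
rewrite ep.
have : (p - (p - d) / 2) * 'C(s, 3)%:R = d * 'C(s, 3)%:R + (p - d) / 2 * 'C(s, 3)%:R by field.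
lra.
Qed.

Theorem proposition2p4 (R : realType) (l : nat) :
  (5 <= l)%N -> ~~ (3 %| l)%N ->
  (4%:R / 27%:R : R) <= uniform_turan_density R l (tight_cycle l).
Proof.
move=> l5 nd.
rewrite /uniform_turan_density.
set E := (X in sup X).
have Ed : forall d : R, 0 <= d -> d < 4 / 27 -> E d.
  move=> d d0 dp; split; first by apply/andP; split => //; lra.
  exact: d_in.
have hs : has_sup E.
  split; first by exists 0; apply: Ed => //; lra.
  by exists 1 => y [/andP[_ ->]].
have ub := sup_upper_bound hs.
have s0 : 0 <= sup E by apply: ub; apply: Ed => //; lra.
rewrite leNgt; apply/negP => hlt.
have : (sup E + 4 / 27) / 2 <= sup E by apply: ub; apply: Ed; lra.
lra.
Qed.
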